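(* Let $d\ge 3$, let $K$ be an algebraically closed field of characteristic $p$ with $p=0$ or $p>d$, let $X_d\subset\mathbb{P}^3(K)$ be a smooth surface of degree $d$, and let $L\subset X_d$ be a line. Then the set $$\{P\in L:\ \mathbb{T}_PX_d\cap V_P \text{ does not consist of two distinct lines}\}$$ is finite.
   Context: Let $f$ be a homogeneous defining polynomial of $X_d$. For $P=(p_0:\dots:p_3)$ and $j=1,2$ put $\mathfrak t_P^{(j)}(z):=\sum_{0\le i_1,\dots,i_j\le 3}\frac{\partial^j f}{\partial w_{i_1}\cdots\partial w_{i_j}}(p_0,\dots,p_3)\,z_{i_1}\cdots z_{i_j}$. Then $\mathbb{T}_PX_d=V(\mathfrak t_P^{(1)})\subset\mathbb{P}^3$ is the projective tangent plane of $X_d$ at $P$, and $V_P=V(\mathfrak t_P^{(2)})\subset\mathbb{P}^3$ is the Hessian quadric of $X_d$ at $P$; the intersection is taken set-theoretically. *)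

(* Defs.v *)
(* Quartic-variable homogeneous forms over a field K are
   represented by their coefficient functions on exponent vectors. *)
From HB Require Import structures.
From mathcomp Require Import all_boot all_order all_algebra.
Set Implicit Arguments. Unset Strict Implicit. Unset Printing Implicit Defensive.
Import Order.TTheory GRing.Theory Num.Theory.
Local Open Scope ring_scope.

(* exponent vectors (w_0^e0 w_1^e1 w_2^e2 w_3^e3) with each e_i <= d *)
Notation monom d := {ffun 'I_4 -> 'I_d.+1}.

Section Forms.
Variable K : fieldType.

Definition mon_eval (e : 'I_4 -> nat) (z : 'rV[K]_4) : K :=
  \prod_(i < 4) z 0 i ^+ e i.

(* formal iterated partial derivative d/dw_{k1} ... d/dw_{kn} of the
   monomial e, evaluated at z *)
Fixpoint dmon (ks : seq 'I_4) (e : 'I_4 -> nat) (z : 'rV[K]_4) : K :=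
  match ks with
  | [::] => mon_eval e z
  | i :: ks' => (e i)%:R * dmon ks' (fun j => if j == i then (e j).-1 else e j) z
  end.

Definition is_homog (d : nat) (c : monom d -> K) : Prop :=
  forall e : monom d, (\sum_(i < 4) (e i : nat))%N != d -> c e = 0.

Definition dform (d : nat) (ks : seq 'I_4) (c : monom d -> K) (z : 'rV[K]_4) : K :=
  \sum_(e : monom d) c e * dmon ks (fun i => (e i : nat)) z.

Definition form_eval (d : nat) (c : monom d -> K) (z : 'rV[K]_4) : K :=
  dform [::] c z.

Definition smooth_form (d : nat) (c : monom d -> K) : Prop :=
  forall z : 'rV[K]_4, z != 0 ->
    ~ (form_eval c z = 0 /\ forall i : 'I_4, dform [:: i] c z = 0).

Definition tan1 (d : nat) (c : monom d -> K) (P z : 'rV[K]_4) : K :=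
  \sum_(i < 4) dform [:: i] c P * z 0 i.
Definition tan2 (d : nat) (c : monom d -> K) (P z : 'rV[K]_4) : K :=
  \sum_(i < 4) \sum_(j < 4) dform [:: i; j] c P * z 0 i * z 0 j.

(* a line of P^3 = row space of a rank-2 2x4 matrix;
   a projective point [z] (z != 0) lies on it iff (z <= M)%MS *)
Definition is_line (M : 'M[K]_(2, 4)) : Prop := \rank M = 2%N.

Definition two_distinct_lines (d : nat) (c : monom d -> K) (P : 'rV[K]_4) : Prop :=
  exists M1 M2 : 'M[K]_(2, 4),
    [/\ is_line M1, is_line M2, ~~ (M1 == M2)%MS &
      forall z : 'rV[K]_4, z != 0 ->
        ((tan1 c P z = 0 /\ tan2 c P z = 0) <-> ((z <= M1)%MS \/ (z <= M2)%MS))].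
End Forms.

(* Main.v *)
Require Import Defs.
From HB Require Import structures.
From mathcomp Require Import all_boot all_order all_algebra.
From mathcomp Require Import ring zify.
Set Implicit Arguments. Unset Strict Implicit. Unset Printing Implicit Defensive.
Import Order.TTheory GRing.Theory Num.Theory.
Local Open Scope ring_scope.

Section Mon.
Variable K : fieldType.

Definition dec (e : 'I_4 -> nat) (i : 'I_4) : 'I_4 -> nat :=
  fun j => if j == i then (e j).-1 else e j.

Lemma sum_dec e i : (0 < e i)%N -> (\sum_j dec e i j = (\sum_j e j).-1)%N.
Proof.
move=> hi; rewrite (bigD1 i) //= [in RHS](bigD1 i) //= /dec eqxx.
rewrite (eq_bigr (fun j => e j)); last by move=> j /negbTE ->.
by case: (e i) hi.
Qed.

Lemma mon_evalZ e (k : K) (z : 'rV[K]_4) :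
  mon_eval e (k *: z) = k ^+ (\sum_i e i) * mon_eval e z.
Proof.
rewrite /mon_eval -prodrXr -big_split /=; apply: eq_bigr => i _.
by rewrite mxE exprMn.
Qed.

Lemma dmonZ ks : forall e (k : K) (z : 'rV[K]_4),
  dmon ks e (k *: z) = k ^+ ((\sum_j e j) - size ks) * dmon ks e z.
Proof.
elim: ks => [|i ks IH] e k z /=; first by rewrite subn0 mon_evalZ.
rewrite IH; case: (posnP (e i)) => [->|hp]; first by rewrite !mul0r mulr0.
rewrite sum_dec // subnS -subn1 subnAC subn1; ring.
Qed.

Lemma mon_dec e j (z : 'rV[K]_4) : (e j)%:R * (z 0 j * mon_eval (dec e j) z) = (e j)%:R * mon_eval e z :> K.
Proof.
case: (posnP (e j)) => [->|hp]; first by rewrite !mul0r.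
congr (_ * _); rewrite /mon_eval (bigD1 j) //= [in RHS](bigD1 j) //= /dec eqxx.
rewrite (eq_bigr (fun k => z 0 k ^+ e k)); last by move=> k /negbTE ->.
rewrite mulrA -exprS prednK //.
Qed.

Lemma euler0 e (z : 'rV[K]_4) :
  \sum_j z 0 j * ((e j)%:R * mon_eval (dec e j) z) = (\sum_j e j)%:R * mon_eval e z :> K.
Proof.
rewrite natr_sum mulr_suml; apply: eq_bigr => j _.
by rewrite mulrCA mon_dec.
Qed.

Lemma dec_comm e i j : i != j -> dec (dec e i) j =1 dec (dec e j) i.
Proof.
move=> hij k; rewrite /dec.
case: (eqVneq k j) => [ekj|hkj]; case: (eqVneq k i) => [eki|hki] //=.
all: try by rewrite -eki ekj eqxx in hij.
all: try by rewrite ?ekj ?eki ?eqxx ?(negbTE hij) // eq_sym (negbTE hij).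
Qed.

End Mon.

Section Form.
Variable K : fieldType.
Variable d : nat.
Variable c : monom d -> K.
Hypothesis hom : is_homog c.

Let ev (e : monom d) : 'I_4 -> nat := fun i => (e i : nat).

Lemma homE e : c e != 0 -> (\sum_i ev e i)%N = d.
Proof. by apply: contraNeq => h; rewrite hom. Qed.

Lemma dformZ ks (k : K) (z : 'rV[K]_4) :
  dform ks c (k *: z) = k ^+ (d - size ks) * dform ks c z.
Proof.
rewrite /dform mulr_sumr; apply: eq_bigr => e _.
case: (eqVneq (c e) 0) => [->|h]; first by rewrite !mul0r mulr0.
by rewrite dmonZ homE //; ring.
Qed.

Lemma euler1 (z : 'rV[K]_4) :
  \sum_i z 0 i * dform [:: i] c z = d%:R * form_eval c z.
Proof.
rewrite /form_eval /dform /=.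
under eq_bigr do rewrite mulr_sumr.
rewrite exchange_big mulr_sumr /=; apply: eq_bigr => e _.
case: (eqVneq (c e) 0) => [->|h]; first by rewrite mul0r mulr0; apply: big1 => i _; rewrite mul0r mulr0.
have E := euler0 (ev e) z; rewrite (homE h) in E.
rewrite mulrCA -E mulr_sumr; apply: eq_bigr => i _; rewrite /ev; ring.
Qed.

Lemma euler2 i (z : 'rV[K]_4) :
  \sum_j z 0 j * dform [:: i; j] c z = (d.-1)%:R * dform [:: i] c z.
Proof.
rewrite /dform /=.
under eq_bigr do rewrite mulr_sumr.
rewrite exchange_big mulr_sumr /=; apply: eq_bigr => e _.
case: (eqVneq (c e) 0) => [->|h]; first by rewrite mul0r mulr0; apply: big1 => j _; rewrite mul0r mulr0.
case: (posnP (ev e i)) => [hi|hi].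
  rewrite /ev in hi; rewrite hi mul0r mulr0 mulr0; apply: big1 => j _; ring.
have := euler0 (dec (ev e) i) z; rewrite sum_dec // homE // => E.
transitivity (c e * (ev e i)%:R * (\sum_j z 0 j * ((dec (ev e) i j)%:R * mon_eval (dec (dec (ev e) i) j) z))).
  by rewrite mulr_sumr; apply: eq_bigr => j _; rewrite /ev /dec /=; ring.
by rewrite E /dec /ev; ring.
Qed.

Lemma dsym i j (z : 'rV[K]_4) : dform [:: i; j] c z = dform [:: j; i] c z.
Proof.
rewrite /dform; apply: eq_bigr => e _ /=.
case: (eqVneq i j) => [->//|hij].
have -> : mon_eval (dec (dec (ev e) i) j) z = mon_eval (dec (dec (ev e) j) i) z.
  by rewrite /mon_eval; apply: eq_bigr => k _; rewrite dec_comm.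
by rewrite /=; congr (_ * _); rewrite mulrCA.
Qed.

End Form.

Section LinePoly.
Variable K : fieldType.
Variables x0 b : 'rV[K]_4.

Definition lf (j : 'I_4) : {poly K} := (x0 0 j)%:P + (b 0 j) *: 'X.
Definition lpr (r : seq 'I_4) (e : 'I_4 -> nat) : {poly K} := \prod_(j <- r) lf j ^+ e j.
Definition lp e := lpr (index_enum 'I_4) e.

Lemma lf_deriv j : (lf j)^`() = (b 0 j)%:P.
Proof. by rewrite /lf derivD derivC derivZ derivX add0r alg_polyC. Qed.

Lemma lfX_deriv j n : (lf j ^+ n)^`() = (n%:R * b 0 j) *: lf j ^+ n.-1.
Proof. by rewrite deriv_exp lf_deriv -mulr_natl -mul_polyC polyCM polyC_natr; ring. Qed.

Lemma lpr_deriv r e : uniq r ->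
  (lpr r e)^`() = \sum_(k <- r) ((e k)%:R * b 0 k) *: lpr r (dec e k).
Proof.
elim: r e => [|a r IH] e /=; first by rewrite /lpr big_nil derivC big_nil.
case/andP => anr ur.
rewrite /lpr big_cons derivM lfX_deriv -/(lpr r e) IH // big_cons.
have E1 : lpr r (dec e a) = lpr r e.
  rewrite /lpr; apply: eq_big_seq => j jr; congr (_ ^+ _); rewrite /dec.
  by case: eqP => // eja; rewrite -eja jr in anr.
rewrite /lpr big_cons -/(lpr r (dec e a)) E1 /dec eqxx -/(lpr r e).
rewrite -scalerAl; congr (_ + _).
rewrite mulr_sumr; apply: eq_big_seq => k kr.
rewrite big_cons; case: eqP => [eak|_]; first by rewrite eak kr in anr.
by rewrite -/(lpr r _) scalerAr.
Qed.

Lemma lp_deriv e : (lp e)^`() = \sum_k ((e k)%:R * b 0 k) *: lp (dec e k).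
Proof. exact: lpr_deriv (index_enum_uniq _). Qed.

Lemma lp_horner e t : (lp e).[t] = mon_eval e (x0 + t *: b).
Proof.
rewrite /lp /lpr horner_prod /mon_eval; apply: eq_bigr => j _.
by rewrite /lf !hornerE !mxE [t * _]mulrC.
Qed.

End LinePoly.

Lemma size_lf (K : fieldType) (x0 b : 'rV[K]_4) j : (size (lf x0 b j) <= 2)%N.
Proof.
rewrite /lf (leq_trans (size_polyD _ _)) // geq_max (leq_trans (size_polyC_leq1 _)) //=.
by rewrite (leq_trans (size_scale_leq _ _)) // size_polyX.
Qed.

Lemma size_lp (K : fieldType) (x0 b : 'rV[K]_4) e : (size (lp x0 b e) <= (\sum_j e j).+1)%N.
Proof.
rewrite /lp /lpr.
elim/big_rec2: _ => [|j n p _ IH]; first by rewrite size_polyC; case: (_ != 0).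
apply: (leq_trans (size_polyMleq _ _)).
have h1 := size_poly_exp_leq (lf x0 b j) (e j).
have h2 := size_lf x0 b j.
have h3 : (size (lf x0 b j ^+ e j) <= (e j).+1)%N.
  apply: (leq_trans h1); rewrite ltnS.
  by case: (size (lf x0 b j)) h2 => [|[|[|]]] //= _; rewrite ?mul0n ?mul1n.
move: h3 IH; set u := size _; set v := size _; lia.
Qed.

Section FormPoly.
Variable K : fieldType.
Variable d : nat.
Variable c : monom d -> K.
Hypothesis hom : is_homog c.
Variables x0 b : 'rV[K]_4.

Let ev (e : monom d) : 'I_4 -> nat := fun i => (e i : nat).

Definition pF : {poly K} := \sum_e c e *: lp x0 b (ev e).
Definition pD i : {poly K} := \sum_e (c e * (ev e i)%:R) *: lp x0 b (dec (ev e) i).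
Definition pH i k : {poly K} :=
  \sum_e (c e * (ev e i)%:R * (dec (ev e) i k)%:R) *: lp x0 b (dec (dec (ev e) i) k).

Lemma pF_horner t : pF.[t] = form_eval c (x0 + t *: b).
Proof.
rewrite /pF horner_sum /form_eval /dform; apply: eq_bigr => e _.
by rewrite hornerZ lp_horner.
Qed.

Lemma pD_horner i t : (pD i).[t] = dform [:: i] c (x0 + t *: b).
Proof.
rewrite /pD horner_sum /dform; apply: eq_bigr => e _.
by rewrite hornerZ lp_horner /= mulrA.
Qed.

Lemma pH_horner i k t : (pH i k).[t] = dform [:: i; k] c (x0 + t *: b).
Proof.
rewrite /pH horner_sum /dform; apply: eq_bigr => e _.
by rewrite hornerZ lp_horner /= !mulrA.
Qed.

Lemma pF_deriv : pF^`() = \sum_k b 0 k *: pD k.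
Proof.
rewrite /pF raddf_sum /=.
under eq_bigr do rewrite derivZ lp_deriv scaler_sumr.
rewrite exchange_big /=; apply: eq_bigr => k _.
rewrite scaler_sumr; apply: eq_bigr => e _.
by rewrite !scalerA; congr (_ *: _); rewrite /ev; ring.
Qed.

Lemma pD_deriv i : (pD i)^`() = \sum_k b 0 k *: pH i k.
Proof.
rewrite /pD raddf_sum /=.
under eq_bigr do rewrite derivZ lp_deriv scaler_sumr.
rewrite exchange_big /=; apply: eq_bigr => k _.
rewrite scaler_sumr; apply: eq_bigr => e _.
by rewrite !scalerA; congr (_ *: _); rewrite /ev; ring.
Qed.

Lemma pD_size i : (size (pD i) <= d)%N.
Proof.
rewrite /pD; apply: (big_ind (fun p : {poly K} => (size p <= d)%N)).
- by rewrite size_poly0.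
- by move=> p q hp hq; rewrite (leq_trans (size_polyD _ _)) // geq_max hp hq.
move=> e _.
case: (eqVneq (c e) 0) => [->|h]; first by rewrite mul0r scale0r size_poly0.
case: (posnP (ev e i)) => [->|hi]; first by rewrite mulr0 scale0r size_poly0.
rewrite (leq_trans (size_scale_leq _ _)) // (leq_trans (size_lp _ _ _)) //.
rewrite sum_dec // (homE hom h).
have : (0 < d)%N by rewrite -(homE hom h) (bigD1 i) //= (leq_trans hi) // leq_addr.
by case: d.
Qed.

End FormPoly.

Lemma poly_allroots0 (K : closedFieldType) (p : {poly K}) :
  (forall t, p.[t] = 0) -> p = 0.
Proof.
move=> h.
have s1 : (size (p + 1)%R <= 1)%N.
  have : size (p + 1)%R == 1%N.
    apply/negPn/negP => /closed_rootP [x].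
    by rewrite /root !hornerE h add0r oner_eq0.
  by move/eqP ->.
have E := size1_polyC s1.
have : p = ((p + 1)`_0 - 1)%:P by rewrite polyCB -E addrK.
move=> E2; move: (h 0); rewrite E2 hornerC => E3.
by rewrite E3 polyC0.
Qed.

Lemma poly_roots_nz (K : closedFieldType) (p : {poly K}) :
  (forall t, t != 0 -> p.[t] = 0) -> p = 0.
Proof.
move=> h.
have : 'X * p = 0.
  apply: poly_allroots0 => t; rewrite hornerM hornerX.
  by case: (eqVneq t 0) => [->|/h ->]; rewrite ?mul0r ?mulr0.
by move/eqP; rewrite mulf_eq0 polyX_eq0 /= => /eqP.
Qed.

Lemma aux (R : comRingType) (r y ym g g' r' nn : R) :
  r * (y * ym) * g' = g * (r' * (y * ym) + r * (ym * nn)) ->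
  ym * (r * y * g') = ym * (g * (r' * y + r * nn)).
Proof.
move=> h.
transitivity (r * (y * ym) * g'); first by ring.
rewrite h; ring.
Qed.

Lemma wronsk_mult (K : fieldType) (G Hq : {poly K}) x n :
  Hq * G^`() = G * Hq^`() -> G.[x] != 0 -> Hq.[x] = 0 -> (size Hq <= n)%N ->
  (forall m, (0 < m < n)%N -> m%:R != 0 :> K) -> Hq = 0.
Proof.
move=> W Gx Hx sH hm; apply/eqP; apply/negPn/negP => Hn.
have [m [R] /= + EH] := multiplicity_XsubC Hq x.
rewrite Hn /= => Rx.
have R0 : R != 0 by apply: contraNneq Rx => ->; rewrite root0.
case: m EH => [|m'] EH.
  by move: Rx; rewrite /root -Hx EH expr0 mulr1 eqxx.
have sizeH : size Hq = (size R + m'.+1)%N.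
  rewrite EH size_mul // ?size_exp_XsubC ?expf_neq0 ?polyXsubC_eq0 //.
  by rewrite addnS.
have hm' : (m'.+1)%:R != 0 :> K.
  apply: hm; apply/andP; split => //.
  rewrite sizeH in sH; move: sH (size_poly_gt0 R); rewrite R0; lia.
set Y := 'X - x%:P in EH.
have dY : Y^`() = 1 by rewrite derivXsubC.
have DH : Hq^`() = R^`() * Y ^+ m'.+1 + R * (Y ^+ m' *+ m'.+1).
  by rewrite EH derivM deriv_exp dY mul1r.
have Y0 : Y ^+ m' != 0 by rewrite expf_neq0 // polyXsubC_eq0.
move: W; rewrite DH EH exprS -mulr_natr => W.
have W3 := mulfI Y0 (aux W).
have := congr1 (fun q => q.[x]) W3; rewrite /= !hornerE /Y -polyC_natr hornerC subrr !mulr0 mul0r add0r.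
move/esym/eqP; rewrite mulf_eq0 (negbTE Gx) /= mulf_eq0 (negbTE hm') orbF.
by move/eqP => Rx0; move: Rx; rewrite /root Rx0 eqxx.
Qed.

Lemma wr_prop (K : fieldType) n (p : 'I_4 -> {poly K}) k x :
  (forall i j, p i * (p j)^`() = p j * (p i)^`()) -> (p k).[x] != 0 ->
  (forall i, (size (p i) <= n)%N) -> (forall m, (0 < m < n)%N -> m%:R != 0 :> K) ->
  forall i, p i = ((p i).[x] / (p k).[x]) *: p k.
Proof.
move=> W pk sz hm i; set l := _ / _.
apply/eqP; rewrite -subr_eq0; apply/eqP.
apply: (wronsk_mult (G := p k) (x := x) (n := n)) => //.
- rewrite derivB derivZ -!mul_polyC mulrBl (W i k); ring.
- by rewrite hornerD hornerN hornerZ /l divfK // subrr.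
- by rewrite (leq_trans (size_polyD _ _)) // size_polyN geq_max sz (leq_trans (size_scale_leq _ _)).
Qed.

Section LA.
Variable K : fieldType.
Implicit Types x y z : 'rV[K]_4.

Definition dot x y : K := (x *m y^T) 0 0.

Lemma dotDl x y z : dot (x + y) z = dot x z + dot y z.
Proof. by rewrite /dot mulmxDl mxE. Qed.
Lemma dotZl a x z : dot (a *: x) z = a * dot x z.
Proof. by rewrite /dot -scalemxAl mxE. Qed.
Lemma dotC x y : dot x y = dot y x.
Proof. by rewrite /dot -[x *m y^T]trmxK trmx_mul trmxK mxE. Qed.
Lemma dotDr x y z : dot z (x + y) = dot z x + dot z y.
Proof. by rewrite dotC dotDl !(dotC z). Qed.
Lemma dotZr a x z : dot z (a *: x) = a * dot z x.
Proof. by rewrite dotC dotZl dotC. Qed.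
Lemma dotNl x z : dot (- x) z = - dot x z.
Proof. by rewrite -scaleN1r dotZl mulN1r. Qed.
Lemma dotNr x z : dot z (- x) = - dot z x.
Proof. by rewrite -scaleN1r dotZr mulN1r. Qed.
Lemma dot0r z : dot z 0 = 0.
Proof. by rewrite /dot trmx0 mulmx0 mxE. Qed.

Lemma mx11_eq0 (A : 'M[K]_1) : (A == 0) = (A 0 0 == 0).
Proof.
apply/eqP/eqP => [->|h]; first by rewrite mxE.
by rewrite [A]mx11_scalar h raddf0.
Qed.

Variable H : 'M[K]_4.
Hypothesis Hsym : H^T = H.

Definition bil x y := dot (x *m H) y.

Lemma bilC x y : bil x y = bil y x.
Proof.
by rewrite /bil dotC /dot trmx_mul Hsym mulmxA.
Qed.
Lemma bilDl x y z : bil (x + y) z = bil x z + bil y z.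
Proof. by rewrite /bil mulmxDl dotDl. Qed.
Lemma bilZl a x z : bil (a *: x) z = a * bil x z.
Proof. by rewrite /bil -scalemxAl dotZl. Qed.
Lemma bilDr x y z : bil z (x + y) = bil z x + bil z y.
Proof. by rewrite /bil dotDr. Qed.
Lemma bilZr a x z : bil z (a *: x) = a * bil z x.
Proof. by rewrite /bil dotZr. Qed.

Lemma LA (g P b : 'rV[K]_4) (M : 'M[K]_(2,4)) (k : K) :
  (2%:R : K) != 0 -> P != 0 ->
  \rank M = 2%N -> (P <= M)%MS -> (b <= M)%MS ->
  (forall x, (x <= M)%MS -> exists a1 a2, x = a1 *: P + a2 *: b) ->
  dot g P = 0 -> dot g b = 0 -> P *m H = k *: g -> bil b b = 0 ->
  \rank (col_mx g (b *m H)) = 2%N ->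
  exists M1 M2 : 'M[K]_(2,4), [/\ \rank M1 = 2%N, \rank M2 = 2%N, ~~ (M1 == M2)%MS &
    forall z, z != 0 -> ((dot g z = 0 /\ bil z z = 0) <-> ((z <= M1)%MS \/ (z <= M2)%MS))].
Proof.
move=> h2 P0 rM PM bM comb gP gb PH bb rN.
set h := b *m H.
have hx x : dot h x = bil b x by [].
have bilP x : bil P x = k * dot g x by rewrite /bil PH dotZl.
have bPP : bil P P = 0 by rewrite bilP gP mulr0.
have bPb : bil P b = 0 by rewrite bilP gb mulr0.
have bbP : bil b P = 0 by rewrite bilC.
have [B NB] : exists B : 'M[K]_(4,2), col_mx g h *m B = 1%:M.
  by apply/row_freeP; rewrite /row_free rN.
rewrite mul_col_mx in NB.
have gB : g *m B = usubmx (1%:M : 'M[K]_(1 + 1)) by rewrite -NB col_mxKu.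
have hB : h *m B = dsubmx (1%:M : 'M[K]_(1 + 1)) by rewrite -NB col_mxKd.
set v := (col 1 B)^T.
have gv : dot g v = 0.
  have := congr1 (fun A : 'M[K]_(1,2) => A 0 1) gB; rewrite /dot /v trmxK !mxE /= => E.
  by rewrite -[RHS]E; apply: eq_bigr => j _; rewrite !mxE.
have hv : dot h v = 1.
  have := congr1 (fun A : 'M[K]_(1,2) => A 0 1) hB; rewrite /dot /v trmxK !mxE /= => E.
  by rewrite -[RHS]E; apply: eq_bigr => j _; rewrite !mxE.
have inN x : dot g x = 0 -> dot h x = 0 -> x *m (col_mx g h)^T = 0.
  move=> e1 e2; apply/eqP; rewrite tr_col_mx mul_mx_row row_mx_eq0 !mx11_eq0.
  by rewrite -/(dot x g) -/(dot x h) !(dotC x) e1 e2 eqxx.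
have inM x : (x <= M)%MS -> dot g x = 0 /\ dot h x = 0.
  move=> /comb [a1 [a2 ->]]; rewrite !dotDr !dotZr gP gb !hx bbP bb.
  by split; ring.
have sMK : (M <= kermx (col_mx g h)^T)%MS.
  apply/sub_kermxP/row_matrixP => i; rewrite row_mul row0.
  by have [e1 e2] := inM _ (row_sub i M); apply: inN.
have rK : \rank (kermx (col_mx g h)^T) = 2%N by rewrite mxrank_ker mxrank_tr rN.
have sKM : (kermx (col_mx g h)^T <= M)%MS.
  by rewrite -(mxrank_leqif_sup sMK).2 rM rK.
have ker x : dot g x = 0 -> dot h x = 0 -> (x <= M)%MS.
  by move=> e1 e2; apply: submx_trans sKM; apply/sub_kermxP; apply: inN.
set c := bil v v.
have bPv : bil P v = 0 by rewrite bilP gv mulr0.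
have bvP : bil v P = 0 by rewrite bilC.
have bbv : bil b v = 1 by rewrite -hx.
have bvb : bil v b = 1 by rewrite bilC.
have Qf a1 a2 u : bil (a1 *: P + a2 *: b + u *: v) (a1 *: P + a2 *: b + u *: v)
    = u * (2%:R * a2 + u * c).
  rewrite !bilDl !bilDr !bilZl !bilZr bPP bPb bbP bb bPv bvP bbv bvb -/c; ring.
set w := 2%:R *: v + (- c) *: b.
have gw : dot g w = 0 by rewrite /w dotDr !dotZr gv gb; ring.
have hw : dot h w = 2%:R by rewrite /w dotDr !dotZr hv !hx bb; ring.
have hP : dot h P = 0 by rewrite hx.
have wM : ~~ (w <= M)%MS.
  by apply/negP => /inM [_]; rewrite hw; apply/eqP.
have w0 : w != 0 by apply: contraNneq wM => ->; rewrite sub0mx.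
have rM2 : \rank (col_mx P w) = 2%N.
  rewrite -addsmxE mxrank_disjoint_sum ?rank_rV ?P0 ?w0 //.
  apply/eqP; rewrite -submx0; apply/row_subP => i.
  have := row_sub i (P :&: w)%MS; rewrite sub_capmx => /andP [/sub_rVP [a1 e1] /sub_rVP [a3 e3]].
  have : a3 * 2%:R = 0.
    have := congr1 (dot h) e3; rewrite e1 !dotZr hP hw mulr0 => <- //.
  move/eqP; rewrite mulf_eq0 (negbTE h2) orbF => /eqP a30.
  by rewrite e3 a30 scale0r sub0mx.
have sub2 x : (x <= (P + w)%MS)%MS -> (x <= col_mx P w)%MS by rewrite -addsmxE.
have sub2' x : (x <= col_mx P w)%MS -> (x <= (P + w)%MS)%MS by rewrite -addsmxE.
exists M, (col_mx P w); split => //.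
  have wS : (w <= col_mx P w)%MS by rewrite -addsmxE addsmxSr.
  apply/negP => /andP [_] /(submx_trans wS); exact/negP.
move=> z z0; split.
  case=> gz Qz.
  set u := dot h z; set y := z - u *: v.
  have gy : dot g y = 0 by rewrite /y dotDr dotNr dotZr gz gv; ring.
  have hy : dot h y = 0 by rewrite /y dotDr dotNr dotZr hv; rewrite -/u; ring.
  have [a1 [a2 ey]] := comb _ (ker _ gy hy).
  have ez : z = a1 *: P + a2 *: b + u *: v by rewrite -ey /y subrK.
  rewrite ez Qf in Qz.
  case: (eqVneq u 0) => [u0|un0].
    left; rewrite ez u0 scale0r addr0.
    by apply: addmx_sub; apply: scalemx_sub.
  right.
  have E : 2%:R * a2 = - (u * c).
    by apply/eqP; rewrite -addr_eq0; move/eqP: Qz; rewrite mulf_eq0 (negbTE un0) /=.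
  have ea2 : a2 = - (u * c) / 2%:R by rewrite -E mulrC mulKf.
  have e1 : u / 2%:R * 2%:R = u by rewrite divfK.
  have e2 : u / 2%:R * - c = a2 by rewrite ea2; ring.
  have -> : z = a1 *: P + (u / 2%:R) *: w.
    by rewrite ez /w scalerDr !scalerA e1 e2 -addrA [a2 *: b + _]addrC.
  apply: sub2; apply: addmx_sub_adds; apply: scalemx_sub; exact: submx_refl.
case=> zM.
  have [gz _] := inM _ zM; split => //.
  have [a1 [a2 ez]] := comb _ zM.
  have -> : z = a1 *: P + a2 *: b + 0 *: v by rewrite scale0r addr0.
  by rewrite Qf mul0r.
move/sub2': zM; case/sub_addsmxP => [[u1 u2] /= ez].
rewrite (mx11_scalar u1) (mx11_scalar u2) !mul_scalar_mx in ez.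
set a1 := u1 0 0 in ez; set a3 := u2 0 0 in ez.
split.
  by rewrite ez dotDr !dotZr gP gw; ring.
have -> : z = a1 *: P + (a3 * - c) *: b + (a3 * 2%:R) *: v.
  by rewrite ez /w scalerDr !scalerA [(a3 * 2%:R) *: v + _]addrC addrA.
rewrite Qf; ring.
Qed.

End LA.

Section Conv.
Variable K : fieldType.
Variable d : nat.
Variable c : monom d -> K.

Definition gv (z : 'rV[K]_4) : 'rV[K]_4 := \row_i dform [:: i] c z.
Definition Hm (z : 'rV[K]_4) : 'M[K]_4 := \matrix_(i, j) dform [:: i; j] c z.

Lemma dot_sum (x y : 'rV[K]_4) : dot x y = \sum_i x 0 i * y 0 i.
Proof. by rewrite /dot mxE; apply: eq_bigr => i _; rewrite mxE. Qed.

Lemma bil_sum (H : 'M[K]_4) (x y : 'rV[K]_4) :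
  bil H x y = \sum_i \sum_j x 0 i * H i j * y 0 j.
Proof.
rewrite /bil dot_sum exchange_big; apply: eq_bigr => j _.
by rewrite mxE mulr_suml; apply: eq_bigr => i _.
Qed.

Lemma tan1E P z : tan1 c P z = dot (gv P) z.
Proof. by rewrite /tan1 dot_sum; apply: eq_bigr => i _; rewrite mxE. Qed.

Lemma tan2E P z : tan2 c P z = bil (Hm P) z z.
Proof.
rewrite /tan2 bil_sum; apply: eq_bigr => i _; apply: eq_bigr => j _.
by rewrite mxE; ring.
Qed.

Lemma Hm_sym z : (Hm z)^T = Hm z.
Proof. by apply/matrixP => i j; rewrite !mxE dsym. Qed.

End Conv.

Lemma root_in (K : closedFieldType) (W : {poly K}) : W != 0 ->
  exists rs : seq K, forall t, W.[t] = 0 -> t \in rs.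
Proof.
move=> W0; have [rs E] := closed_field_poly_normal W.
exists rs => t Wt; move: Wt; rewrite {1}E hornerZ horner_prod => /eqP.
rewrite mulf_eq0 lead_coef_eq0 (negbTE W0) /= prodf_seq_eq0 => /hasP [z zr].
by rewrite hornerXsubC subr_eq0 => /eqP ->.
Qed.

Lemma rank_prop (F : fieldType) (x y : 'rV[F]_4) :
  x != 0 -> \rank (col_mx x y) != 2%N -> exists l, y = l *: x.
Proof.
move=> x0 r.
have sx : (x <= col_mx x y)%MS by rewrite -addsmxE addsmxSl.
have sy : (y <= col_mx x y)%MS by rewrite -addsmxE addsmxSr.
have [le1 eq1] := mxrank_leqif_sup sx; rewrite rank_rV x0 in le1 eq1.
have r2 : (\rank (col_mx x y) <= 2)%N by apply: rank_leq_row.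
have sN : (col_mx x y <= x)%MS.
  rewrite -eq1; apply/eqP; move: le1 r2 r; lia.
by apply/sub_rVP; exact: submx_trans sy sN.
Qed.

Section Main.
Variable K : closedFieldType.
Variable d : nat.
Hypothesis hd : (3 <= d)%N.
Hypothesis hchar : forall p : nat, p \in [pchar K] -> (d < p)%N.
Variable f : monom d -> K.
Hypothesis hhom : is_homog f.
Hypothesis hsmooth : smooth_form f.
Variable L : 'M[K]_(2, 4).
Hypothesis hL : is_line L.
Hypothesis hLX : forall z : 'rV[K]_4, (z <= L)%MS -> form_eval f z = 0.

Lemma cm m : (0 < m < d)%N -> m%:R != 0 :> K.
Proof.
case/andP=> m0 md; rewrite natf_neq0_pchar; apply/(pnatP _ m0) => p pp pdm.
rewrite !inE; apply/negP => pc; have := hchar pc; have := dvdn_leq m0 pdm; lia.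
Qed.

Lemma two0 : 2%:R != 0 :> K.
Proof. by apply: cm; lia. Qed.

Local Notation g := (gv f).
Local Notation H := (Hm f).

Lemma g_ne0 x : (x <= L)%MS -> x != 0 -> g x != 0.
Proof.
move=> xL x0; apply/negP => /eqP g0; apply: (hsmooth x0); split; first exact: hLX.
by move=> i; have := congr1 (fun v : 'rV[K]_4 => v 0 i) g0; rewrite !mxE.
Qed.

Lemma gZ a x : g (a *: x) = a ^+ d.-1 *: g x.
Proof. by apply/rowP => i; rewrite !mxE dformZ // subn1. Qed.

Lemma HZ a x : H (a *: x) = a ^+ (d - 2) *: H x.
Proof. by apply/matrixP => i j; rewrite !mxE dformZ. Qed.

Lemma euler_g x : (x <= L)%MS -> dot (g x) x = 0.
Proof.
move=> xL; rewrite dot_sum; under eq_bigr do rewrite mxE mulrC.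
by rewrite euler1 // hLX // mulr0.
Qed.

Lemma euler_H x : x *m H x = (d.-1)%:R *: g x.
Proof.
apply/rowP => j; rewrite !mxE -euler2 //; apply: eq_bigr => i _.
by rewrite !mxE dsym.
Qed.

Lemma line_g x0 y : (x0 <= L)%MS -> (y <= L)%MS ->
  dot (g x0) y = 0 /\ bil (H x0) y y = 0.
Proof.
move=> x0L yL.
have pF0 : pF f x0 y = 0.
  apply: poly_allroots0 => t; rewrite pF_horner hLX //.
  by apply: addmx_sub => //; apply: scalemx_sub.
have d1 := congr1 deriv pF0; rewrite pF_deriv derivC in d1.
have d2 : \sum_k y 0 k *: (\sum_l y 0 l *: pH f x0 y k l) = 0.
  have := congr1 deriv d1; rewrite raddf_sum derivC => E.
  rewrite -[RHS]E; apply: eq_bigr => k _.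
  by rewrite -[RHS]/(deriv (y 0 k *: pD f x0 y k)) derivZ pD_deriv.
have e0 : x0 + 0 *: y = x0 by rewrite scale0r addr0.
split.
  have := congr1 (fun p => p.[0]) d1; rewrite /= horner_sum hornerC => <-.
  rewrite dot_sum; apply: eq_bigr => i _; by rewrite hornerZ pD_horner e0 mxE mulrC.
have := congr1 (fun p => p.[0]) d2; rewrite /= horner_sum hornerC => <-.
rewrite bil_sum; apply: eq_bigr => i _; rewrite hornerZ horner_sum mulr_sumr.
apply: eq_bigr => j _; rewrite hornerZ pH_horner e0 mxE; ring.
Qed.

Local Notation a := (row ord0 L).
Local Notation b := (row (lift ord0 (ord0 : 'I_1)) L).

Lemma Lcomb x : (x <= L)%MS -> exists al be, x = al *: a + be *: b.
Proof.
case/submxP => D ->; rewrite mulmx_sum_row !big_ord_recl big_ord0 addr0.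
by exists (D 0 ord0), (D 0 (lift ord0 ord0)).
Qed.

Lemma aL : (a <= L)%MS. Proof. exact: row_sub. Qed.
Lemma bL : (b <= L)%MS. Proof. exact: row_sub. Qed.

Lemma combL al be : ((al *: a + be *: b)%R <= L)%MS.
Proof. by apply: addmx_sub; apply: scalemx_sub; [exact: aL | exact: bL]. Qed.

Lemma indep al be : al *: a + be *: b = 0 -> al = 0 /\ be = 0.
Proof.
move=> E.
have [B LB] : exists B : 'M[K]_(4,2), L *m B = 1%:M by apply/row_freeP; rewrite /row_free hL.
set u : 'rV[K]_2 := \row_i (if i == ord0 then al else be).
have uL : u *m L = 0.
  by rewrite mulmx_sum_row !big_ord_recl big_ord0 addr0 !mxE /= -E.
have u0 : u = 0 by rewrite -[u]mulmx1 -LB mulmxA uL mul0mx.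
split.
  by have := congr1 (fun v : 'rV[K]_2 => v 0 ord0) u0; rewrite !mxE.
by have := congr1 (fun v : 'rV[K]_2 => v 0 (lift ord0 ord0)) u0; rewrite !mxE.
Qed.

Lemma comb_ne0 al be : (al != 0) || (be != 0) -> al *: a + be *: b != 0.
Proof.
move=> h; apply/negP => /eqP /indep [e1 e2]; move: h; by rewrite e1 e2 eqxx.
Qed.

Local Notation p := (pD f a b).

Lemma Wall : ~ (forall i j, p i * (p j)^`() = p j * (p i)^`()).
Proof.
move=> W.
have a0 : a != 0.
  have := @comb_ne0 1 0; rewrite oner_eq0 /= scale0r addr0 scale1r; exact.
have b0 : b != 0.
  have := @comb_ne0 0 1; rewrite oner_eq0 orbT scale0r add0r scale1r; exact.
have ga := g_ne0 aL a0.
have [k pk] : exists k, (p k).[0] != 0.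
  case: (boolP [exists k, (g a) 0 k != 0]) => [/existsP [k hk]|].
    by exists k; rewrite pD_horner scale0r addr0; move: hk; rewrite mxE.
  rewrite negb_exists => /forallP h0; case/negP: ga; apply/eqP/rowP => j.
  by have := h0 j; rewrite negbK mxE => /eqP ->; rewrite mxE.
have prop := wr_prop W pk (pD_size hhom a b) cm.
have pkt t : (p k).[t] != 0.
  apply/negP => /eqP pt.
  have : g (1 *: a + t *: b) == 0.
    apply/eqP/rowP => j; rewrite !mxE scale1r -pD_horner (prop j) hornerZ pt mulr0.
    by [].
  by apply/negP; apply: g_ne0; [exact: combL | rewrite comb_ne0 // oner_eq0].
have sk : size (p k) == 1%N.
  by apply/negPn/negP => /closed_rootP [x]; rewrite /root (negbTE (pkt x)).
set C := (p k)`_0.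
have pkC : p k = C%:P by apply: size1_polyC; rewrite (eqP sk).
have gchart i t : dform [:: i] f (a + t *: b) = ((p i).[0] / (p k).[0]) * C.
  by rewrite -pD_horner {1}(prop i) hornerZ [in (_ k).[t]]pkC hornerC.
have gb : g b = 0.
  apply/rowP => i; rewrite !mxE.
  set lam := ((p i).[0] / (p k).[0]) * C.
  have r0 : pD f b a i - lam *: 'X^(d.-1) = 0.
    apply: poly_roots_nz => u u0.
    rewrite hornerD hornerN hornerZ hornerXn pD_horner.
    have -> : b + u *: a = u *: (a + u^-1 *: b).
      by apply/rowP => j; rewrite !mxE; field.
    rewrite dformZ // gchart -/lam subn1 /=; ring.
  have := congr1 (fun q => q.[0]) r0; rewrite /= hornerD hornerN hornerZ hornerXn.
  rewrite pD_horner scale0r addr0 expr0n /=.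
  have -> : (d.-1 == 0)%N = false by apply/negbTE; lia.
  by rewrite mulr0 subr0 horner0.
by move: (g_ne0 bL b0); rewrite gb eqxx.
Qed.

Lemma Wt_eq i j t :
  (p i * (p j)^`() - p j * (p i)^`()).[t] =
  (g (a + t *: b)) 0 i * (b *m H (a + t *: b)) 0 j
  - (g (a + t *: b)) 0 j * (b *m H (a + t *: b)) 0 i.
Proof.
have E k : ((p k)^`()).[t] = (b *m H (a + t *: b)) 0 k.
  rewrite pD_deriv horner_sum !mxE; apply: eq_bigr => l _.
  by rewrite hornerZ pH_horner !mxE dsym.
by rewrite hornerD hornerN !hornerM !E !pD_horner !mxE.
Qed.

Lemma final : exists s : seq 'rV[K]_4,
  forall P : 'rV[K]_4, P != 0 -> (P <= L)%MS ->
    ~ two_distinct_lines f P -> exists2 Q, Q \in s & (P <= Q)%MS.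
Proof.
have [i0 [j0 Wn]] : exists i j, p i * (p j)^`() - p j * (p i)^`() != 0.
  case: (boolP [exists i, [exists j, p i * (p j)^`() - p j * (p i)^`() != 0]]).
    by case/existsP => i /existsP [j h]; exists i, j.
  rewrite negb_exists => /forallP h; exfalso; apply: Wall => i j.
  by have := h i; rewrite negb_exists => /forallP /(_ j); rewrite negbK subr_eq0 => /eqP.
have [rs Hrs] := root_in Wn.
exists (b :: [seq a + t *: b | t <- rs]).
move=> P P0 PL nt.
have [al [be eP]] := Lcomb PL.
case: (eqVneq al 0) => [al0|aln0].
  exists b; first exact: mem_head.
  by rewrite eP al0 scale0r add0r scalemx_sub.
set t := be / al.
have eP' : P = al *: (a + t *: b) by rewrite eP /t; apply/rowP => j; rewrite !mxE; field.
exists (a + t *: b); last by rewrite eP' scalemx_sub.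
rewrite inE; apply/orP; right; apply/mapP; exists t => //; apply: Hrs.
have combP x : (x <= L)%MS -> exists a1 a2, x = a1 *: P + a2 *: b.
  case/Lcomb => [al' [be' ->]]; exists (al' / al), (be' - al' * be / al).
  by rewrite eP; apply/rowP => j; rewrite !mxE; field.
have [gb bb] := line_g PL bL.
have rk : \rank (col_mx (g P) (b *m H P)) != 2%N.
  apply/eqP => rk; apply: nt.
  have [M1 [M2 [r1 r2 n12 hz]]] := LA (Hm_sym f P) two0 P0 hL PL bL combP (euler_g PL) gb (euler_H P) bb rk.
  exists M1, M2; split => // z z0; rewrite tan1E tan2E; exact: hz.
have [l hl] := rank_prop (g_ne0 PL P0) rk.
rewrite Wt_eq.
move: hl; rewrite eP' gZ HZ -scalemxAr scalerA => hl.
have hl' k : al ^+ (d - 2) * (b *m H (a + t *: b)) 0 k = l * al ^+ d.-1 * (g (a + t *: b)) 0 k.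
  by have := congr1 (fun v : 'rV[K]_4 => v 0 k) hl; rewrite !mxE.
have an : al ^+ (d - 2) != 0 by rewrite expf_neq0.
move: hl' an; set A := al ^+ (d - 2); set B := al ^+ d.-1; move=> hl' an.
set G := g (a + t *: b); set Hb := b *m H (a + t *: b).
apply: (mulfI an); rewrite mulr0.
transitivity (G 0 i0 * (A * Hb 0 j0) - G 0 j0 * (A * Hb 0 i0)); first by ring.
rewrite !hl'; ring.
Qed.

End Main.

Unset Implicit Arguments. Set Strict Implicit.

Theorem lemma2p6 (K : closedFieldType) (d : nat) (hd : (3 <= d)%N)
  (hchar : forall p : nat, p \in [pchar K] -> (d < p)%N)
  (f : monom d -> K) (hhom : is_homog f) (hf0 : exists e, f e != 0)
  (hsmooth : smooth_form f)
  (L : 'M[K]_(2, 4)) (hL : is_line L)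
  (hLX : forall z : 'rV[K]_4, (z <= L)%MS -> form_eval f z = 0) :
  exists s : seq 'rV[K]_4,
    forall P : 'rV[K]_4, P != 0 -> (P <= L)%MS ->
      ~ two_distinct_lines f P ->
      exists2 Q, Q \in s & (P <= Q)%MS.
Proof.
exact: (final hd hchar hhom hsmooth hL hLX).
Qed.
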